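(* Let $$A = \begin{pmatrix} a_1 & b_1\\ c_1 & d_1\end{pmatrix},\qquad B = \begin{pmatrix} a_2 & b_2\\ c_2 & d_2\end{pmatrix}$$ be elements of $\mathrm{SL}_2(\mathbb{N}_0)$. Then $(A,B)$ is a left-right pair if and only if $a_1 d_2 \le b_2 c_1$ or $a_2 d_1 \le c_2 b_1$.
   Context: $\mathbb{N}_0=\{0,1,2,\dots\}$ and $\mathrm{SL}_2(\mathbb{N}_0)$ is the set of $2\times 2$ matrices $\begin{pmatrix} a & b\\ c & d\end{pmatrix}$ with $a,b,c,d\in\mathbb{N}_0$ and $ad-bc=1$. Such a matrix $T$ acts on the Riemann sphere $\overline{\mathbb{C}}=\mathbb{C}\cup\{\infty\}$ by the Möbius transformation $T(z)=\frac{az+b}{cz+d}$. Let $\mathcal{D}_0=\{x+iy : x>0,\ y>0\}$ (the open first quadrant). A pair $(L,R)$ of elements of $\mathrm{SL}_2(\mathbb{N}_0)$ is called a left-right pair if $L(\mathcal{D}_0)\cap R(\mathcal{D}_0)=\emptyset$. *)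

(* Defs.v *)
From Stdlib Require Import Reals Lra Lia.
Open Scope R_scope.

(** Complex numbers x + i y as pairs (x, y). *)
Definition Cpx := (R * R)%type.

Definition Cadd (z w : Cpx) : Cpx := (fst z + fst w, snd z + snd w).
Definition Cmul (z w : Cpx) : Cpx :=
  (fst z * fst w - snd z * snd w, fst z * snd w + snd z * fst w).
Definition Cinv (z : Cpx) : Cpx :=
  let n := fst z * fst z + snd z * snd z in (fst z / n, - snd z / n).
Definition Cdiv (z w : Cpx) : Cpx := Cmul z (Cinv w).
Definition Cofnat (n : nat) : Cpx := (INR n, 0).

(** 2x2 matrices with entries in N_0, [[a, b], [c, d]]. *)
Record mat2 := Mat2 { ma : nat; mb : nat; mc : nat; md : nat }.

Definition SL2N0 (T : mat2) : Prop := (ma T * md T = mb T * mc T + 1)%nat.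

(** Möbius action z |-> (a z + b) / (c z + d).  For T in SL_2(N_0) and z in
    the open first quadrant, c z + d <> 0, so T(z) is a finite complex number. *)
Definition mobius (T : mat2) (z : Cpx) : Cpx :=
  Cdiv (Cadd (Cmul (Cofnat (ma T)) z) (Cofnat (mb T)))
       (Cadd (Cmul (Cofnat (mc T)) z) (Cofnat (md T))).

Definition D0 (z : Cpx) : Prop := 0 < fst z /\ 0 < snd z.

Definition in_image (T : mat2) (w : Cpx) : Prop :=
  exists z, D0 z /\ mobius T z = w.

Definition left_right_pair (L Rm : mat2) : Prop :=
  ~ (exists w, in_image L w /\ in_image Rm w).

(* Main.v *)
Require Import Defs.
From Stdlib Require Import Reals Arith.
From Stdlib Require Import Lra Lia.
Open Scope R_scope.
Definition mob (A B C D : R) (z : Cpx) : Cpx :=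
  Cdiv (Cadd (Cmul (A,0) z) (B,0)) (Cadd (Cmul (C,0) z) (D,0)).
Lemma fwd (A B C D x y : R) : 0 < D -> 0 <= C -> A*D = B*C+1 -> 0<x -> 0<y ->
  C * fst (mob A B C D (x,y)) < A /\ B < D * fst (mob A B C D (x,y)).
Proof.
intros HD HC Hdet Hx Hy.
assert (HA : A = (B*C+1)/D) by (rewrite <- Hdet; field; lra).
subst A.
unfold mob, Cdiv, Cmul, Cadd, Cinv; simpl.
assert (Hp : 0 < C*x + D) by nra.
assert (Hn : 0 < (C * x - 0 * y + D) * (C * x - 0 * y + D) + (C * y + 0 * x + 0) * (C * y + 0 * x + 0)) by nra.
set (n := (C * x - 0 * y + D) * (C * x - 0 * y + D) + (C * y + 0 * x + 0) * (C * y + 0 * x + 0)) in *.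
split.
- match goal with |- ?L < ?R => assert (E : R - L = (C*x+D)/n) end.
  { unfold n. field. split; nra. }
  assert (0 < (C*x+D)/n) by (apply Rdiv_lt_0_compat; lra). lra.
- match goal with |- ?L < ?R => assert (E : R - L = (C*(x*x+y*y)+D*x)/n) end.
  { unfold n. field. split; nra. }
  assert (0 < (C*(x*x+y*y)+D*x)/n) by (apply Rdiv_lt_0_compat; nra). lra.
Qed.
Lemma inv (A B C D u v : R) : 0 < D -> A*D = B*C+1 -> 0<v ->
  (A - C*u)*(D*u - B) - C*D*(v*v) > 0 ->
  exists z, D0 z /\ mob A B C D z = (u,v).
Proof.
intros HD Hdet Hv HQ.
set (E := (A - C*u)*(A-C*u) + (C*v)*(C*v)).
assert (HE : 0 < E).
{ unfold E. destruct (Req_dec C 0) as [H0|H0].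
  - subst C. assert (A <> 0) by (intro; subst; lra). pose proof (Rsqr_pos_lt _ H). unfold Rsqr in *. replace ((A - 0 * u) * (A - 0 * u) + 0 * v * (0 * v)) with (A*A) by ring. lra.
  - assert (C*v <> 0) by (apply Rmult_integral_contrapositive; split; lra). pose proof (Rsqr_pos_lt _ H). unfold Rsqr in *. assert (0 <= (A - C*u)*(A-C*u)) by apply Rle_0_sqr. lra. }
exists (((A - C*u)*(D*u - B) - C*D*(v*v))/E, v/E).
split.
{ split; simpl; apply Rdiv_lt_0_compat; lra. }
assert (HA : A = (B*C+1)/D) by (rewrite <- Hdet; field; lra).
subst A.
unfold mob, Cdiv, Cmul, Cadd, Cinv; simpl.
assert (Hside : D <> 0 /\ (B * C + 1 - C * u * D) * (B * C + 1 - C * u * D) +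
 C * v * (C * v) * (D * D) <> 0).
{ split; [lra|]. replace ((B * C + 1 - C * u * D) * (B * C + 1 - C * u * D) +
 C * v * (C * v) * (D * D)) with (E*(D*D)) by (unfold E; field; lra). assert (0 < D*D) by nra. assert (0 < E*(D*D)) by (apply Rmult_lt_0_compat; lra). lra. }
set (x := ((((B * C + 1) / D) - C*u)*(D*u - B) - C*D*(v*v))/E) in *.
set (y := v/E).
assert (Hn : (C * x - 0 * y + D) * (C * x - 0 * y + D) + (C * y + 0 * x + 0) * (C * y + 0 * x + 0) = 1/E).
{ unfold x, y, E. field. exact Hside. }
rewrite Hn. unfold x, y, E. f_equal; field; exact Hside.
Qed.
Lemma Qpos (A B C D p q S : R) : 0 < q -> A*q >= C*p + 1 -> D*p >= B*q + 1 -> C*D <= S -> 0 <= S ->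
  (A - C*(p/q))*(D*(p/q) - B) - C*D*((1/(q*(S+1)))*(1/(q*(S+1)))) > 0.
Proof.
intros Hq H1 H2 H3 H4.
replace ((A - C*(p/q))*(D*(p/q) - B) - C*D*((1/(q*(S+1)))*(1/(q*(S+1)))))
  with (((A*q - C*p)*(D*p-B*q)*((S+1)*(S+1)) - C*D)/((q*q)*((S+1)*(S+1)))) by (field; lra).
apply Rlt_gt, Rdiv_lt_0_compat.
- assert (1 <= (A*q - C*p)*(D*p-B*q)) by nra.
  assert (S + 1 <= (S+1)*(S+1)) by nra. nra.
- assert (0 < q*q) by nra. assert (0 < (S+1)*(S+1)) by nra. nra.
Qed.
Lemma natfacts (a1 b1 c1 d1 a2 b2 c2 d2 : nat) :
  (a1*d1 = b1*c1+1)%nat -> (a2*d2 = b2*c2+1)%nat -> (b2*c1 < a1*d2)%nat -> (c2*b1 < a2*d1)%nat ->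
  (b1*d2 <= b2*d1)%nat ->
  let K := (c1+c2+1)%nat in let p := (K*b2+1)%nat in let q := (K*d2)%nat in
  (a1*q >= c1*p+1 /\ a2*q >= c2*p+1 /\ d1*p >= b1*q+1 /\ d2*p >= b2*q+1 /\ 0 < q)%nat.
Proof.
intros H1 H2 H3 H4 H5 K p q.
assert (d1 <> 0)%nat by (intro; subst; lia).
assert (d2 <> 0)%nat by (intro; subst; lia).
unfold q, p, K. repeat split; nia.
Qed.
Lemma mob_eq a b c d z : mobius (Mat2 a b c d) z = mob (INR a) (INR b) (INR c) (INR d) z.
Proof. reflexivity. Qed.

Lemma detR a b c d : (a*d = b*c+1)%nat -> INR a * INR d = INR b * INR c + 1.
Proof. intro H. apply (f_equal INR) in H. rewrite mult_INR, plus_INR, mult_INR in H. simpl in H. exact H. Qed.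

Lemma Dpos a b c d : (a*d = b*c+1)%nat -> 0 < INR d.
Proof. intro H. apply lt_0_INR. destruct d; lia. Qed.

Lemma in_img_props a b c d w : (a*d = b*c+1)%nat -> in_image (Mat2 a b c d) w ->
  INR c * fst w < INR a /\ INR b < INR d * fst w.
Proof.
intros H [[x y] [[Hx Hy] Hw]]. rewrite mob_eq in Hw. subst w.
apply fwd; [eapply Dpos; eauto | apply pos_INR | apply detR; auto | auto | auto].
Qed.

Lemma img_of a b c d u v : (a*d = b*c+1)%nat -> 0 < v ->
  (INR a - INR c*u)*(INR d*u - INR b) - INR c*INR d*(v*v) > 0 -> in_image (Mat2 a b c d) (u,v).
Proof.
intros H Hv HQ.
assert (Hd := Dpos _ _ _ _ H). assert (Hdet := detR _ _ _ _ H).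
destruct (inv (INR a) (INR b) (INR c) (INR d) u v Hd Hdet Hv HQ) as [z [Hz Hm]].
exists z. split; [exact Hz|]. rewrite mob_eq. exact Hm.
Qed.

Lemma common (a1 b1 c1 d1 a2 b2 c2 d2 : nat) :
  (a1*d1 = b1*c1+1)%nat -> (a2*d2 = b2*c2+1)%nat -> (b2*c1 < a1*d2)%nat -> (c2*b1 < a2*d1)%nat ->
  (b1*d2 <= b2*d1)%nat ->
  exists w, in_image (Mat2 a1 b1 c1 d1) w /\ in_image (Mat2 a2 b2 c2 d2) w.
Proof.
intros H1 H2 H3 H4 H5.
destruct (natfacts a1 b1 c1 d1 a2 b2 c2 d2 H1 H2 H3 H4 H5) as (F1 & F2 & F3 & F4 & F5).
set (K := (c1+c2+1)%nat) in *. set (p := (K*b2+1)%nat) in *. set (q := (K*d2)%nat) in *.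
set (S := (c1*d1 + c2*d2)%nat).
assert (HS1 : (c1*d1 <= S)%nat) by (unfold S; lia).
assert (HS2 : (c2*d2 <= S)%nat) by (unfold S; lia).
set (v := 1/(INR q*(INR S+1))).
assert (Hq : 0 < INR q) by (apply lt_0_INR; lia).
assert (HS : 0 <= INR S) by apply pos_INR.
assert (Hv : 0 < v) by (unfold v; apply Rdiv_lt_0_compat; nra).
exists (INR p / INR q, v). split; apply img_of; auto; unfold v; apply Qpos; auto;
  repeat match goal with
  | H : (?x >= ?y)%nat |- _ => apply le_INR in H; rewrite ?plus_INR, ?mult_INR in H; simpl in H
  | H : (?x <= ?y)%nat |- _ => apply le_INR in H; rewrite ?plus_INR, ?mult_INR in H; simpl in H
  end; lra.
Qed.

Theorem theorem1p1 (a1 b1 c1 d1 a2 b2 c2 d2 : nat) :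
  SL2N0 (Mat2 a1 b1 c1 d1) -> SL2N0 (Mat2 a2 b2 c2 d2) ->
  (left_right_pair (Mat2 a1 b1 c1 d1) (Mat2 a2 b2 c2 d2) <->
   ((a1 * d2 <= b2 * c1)%nat \/ (a2 * d1 <= c2 * b1)%nat)).
Proof.
unfold SL2N0; simpl. intros H1 H2. split.
- intro HL. destruct (le_lt_dec (a1*d2) (b2*c1)) as [h|h]; [left; exact h|].
  destruct (le_lt_dec (a2*d1) (c2*b1)) as [h'|h']; [right; exact h'|].
  exfalso. apply HL.
  destruct (le_lt_dec (b1*d2) (b2*d1)) as [h5|h5].
  + apply common; auto; lia.
  + destruct (common a2 b2 c2 d2 a1 b1 c1 d1) as [w [Hw1 Hw2]]; auto; try lia.
    exists w; auto.
- intros Hc [w [Hw1 Hw2]].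
  destruct (in_img_props _ _ _ _ _ H1 Hw1) as [P1 P2].
  destruct (in_img_props _ _ _ _ _ H2 Hw2) as [P3 P4].
  pose proof (Dpos _ _ _ _ H1). pose proof (Dpos _ _ _ _ H2).
  pose proof (pos_INR c1). pose proof (pos_INR c2).
  destruct Hc as [h|h]; apply le_INR in h; rewrite !mult_INR in h.
  + assert (INR c1 * fst w * INR d2 < INR a1 * INR d2) by (apply Rmult_lt_compat_r; lra).
    assert (INR c1 * INR b2 <= INR c1 * (INR d2 * fst w)) by (apply Rmult_le_compat_l; lra).
    nra.
  + assert (INR c2 * fst w * INR d1 < INR a2 * INR d1) by (apply Rmult_lt_compat_r; lra).
    assert (INR c2 * INR b1 <= INR c2 * (INR d1 * fst w)) by (apply Rmult_le_compat_l; lra).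
    nra.
Qed.
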